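(* Let $\mathbb{T}$ be a time scale unbounded from above, $t_0\in\mathbb{T}$, $b,c:\mathbb{T}\to[0,\infty)$ with $c-b\in\mathcal{R}^+$, $x_0>0$, $y_0>0$, $z_0\ge0$, $N=x_0+y_0+z_0$. Assume there is $M>0$ with $b(t)\le M(c-b)(t)$ for all $t\in\mathbb{T}$, and $\int_{t_0}^{\infty}(c-b)(\tau)\,\Delta\tau=\infty$. Then every solution $(x,y,z)$ of $$x^{\Delta}=-\frac{b(t)\,x\,y^{\sigma}}{x+y},\qquad y^{\Delta}=\frac{b(t)\,x\,y^{\sigma}}{x+y}-c(t)\,y^{\sigma},\qquad z^{\Delta}=c(t)\,y^{\sigma},$$ with $x,y:\mathbb{T}\to(0,\infty)$, $z:\mathbb{T}\to[0,\infty)$, $x(t_0)=x_0$, $y(t_0)=y_0$, $z(t_0)=z_0$, converges as $t\to\infty$ to $(\alpha,0,N-\alpha)$ for some $\alpha\in(0,N)$.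
   Context: A time scale $\mathbb{T}$ is a nonempty closed subset of $\mathbb{R}$. $\sigma(t)=\inf\{s\in\mathbb{T}:s>t\}$, $\mu(t)=\sigma(t)-t$, $f^{\sigma}=f\circ\sigma$. $f^{\Delta}$ is the delta (Hilger) derivative: for every $\varepsilon>0$ there is $\delta>0$ with $|f(\sigma(t))-f(s)-f^{\Delta}(t)(\sigma(t)-s)|\le\varepsilon|\sigma(t)-s|$ for $s\in(t-\delta,t+\delta)\cap\mathbb{T}$. $\int\cdot\,\Delta\tau$ is the delta integral on $\mathbb{T}$. $p\in\mathcal{R}^+$ means $p$ is rd-continuous (continuous at right-dense points, finite left limits at left-dense points) and $1+\mu(t)p(t)>0$ for all $t\in\mathbb{T}$. *)

(* Defs.v *)
From Stdlib Require Import Reals.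
From Coquelicot Require Import Coquelicot.
Open Scope R_scope.

Definition closed_set (TS : R -> Prop) : Prop :=
  forall x, (forall eps, 0 < eps -> exists s, TS s /\ Rabs (s - x) < eps) -> TS x.

Definition time_scale (TS : R -> Prop) : Prop :=
  (exists t, TS t) /\ closed_set TS.

Definition unbounded_above (TS : R -> Prop) : Prop :=
  forall K, exists t, TS t /\ K < t.

(* forward jump operator sigma(t) = inf {s in T : s > t}
   (finite whenever T is unbounded above) *)
Definition fjump (TS : R -> Prop) (t : R) : R :=
  real (Glb_Rbar (fun s => TS s /\ t < s)).

Definition mu (TS : R -> Prop) (t : R) : R := fjump TS t - t.

Definition has_delta_deriv (TS : R -> Prop) (f : R -> R) (t D : R) : Prop :=
  forall eps, 0 < eps -> exists delta, 0 < delta /\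
    forall s, TS s -> Rabs (s - t) < delta ->
      Rabs (f (fjump TS t) - f s - D * (fjump TS t - s))
        <= eps * Rabs (fjump TS t - s).

Definition right_dense (TS : R -> Prop) (t : R) : Prop := fjump TS t = t.

Definition left_dense (TS : R -> Prop) (t : R) : Prop :=
  forall eps, 0 < eps -> exists s, TS s /\ t - eps < s /\ s < t.

Definition rd_continuous (TS : R -> Prop) (p : R -> R) : Prop :=
  forall t, TS t ->
    (right_dense TS t ->
       forall eps, 0 < eps -> exists delta, 0 < delta /\
         forall s, TS s -> Rabs (s - t) < delta -> Rabs (p s - p t) < eps) /\
    (left_dense TS t ->
       exists L, forall eps, 0 < eps -> exists delta, 0 < delta /\
         forall s, TS s -> t - delta < s -> s < t -> Rabs (p s - L) < eps).

Definition pos_regressive (TS : R -> Prop) (p : R -> R) : Prop :=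
  rd_continuous TS p /\ forall t, TS t -> 0 < 1 + mu TS t * p t.

(* \int_{t0}^{oo} f(tau) Delta tau = +oo, via the Cauchy delta integral:
   \int_{t0}^{t} f Delta tau = F t - F t0 for an antiderivative F
   (F^Delta = f on T), and the improper integral diverges to +oo. *)
Definition delta_integral_infinite (TS : R -> Prop) (f : R -> R) (t0 : R) : Prop :=
  exists F : R -> R,
    (forall t, TS t -> has_delta_deriv TS F t (f t)) /\
    forall K, exists T1, forall t, TS t -> T1 <= t -> K <= F t - F t0.

Definition conv_at_infty (TS : R -> Prop) (f : R -> R) (l : R) : Prop :=
  forall eps, 0 < eps -> exists T1, forall t, TS t -> T1 <= t -> Rabs (f t - l) < eps.

(* Main.v *)
Require Import Defs.
From Stdlib Require Import Reals Lra Classical.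
From Coquelicot Require Import Coquelicot.
Open Scope R_scope.

Lemma fjump_spec TS t : unbounded_above TS ->
  (forall s, TS s -> t < s -> fjump TS t <= s) /\
  (forall g, (forall s, TS s -> t < s -> g <= s) -> g <= fjump TS t).
Proof.
  intros Hu. unfold fjump.
  destruct (Glb_Rbar_correct (fun s => TS s /\ t < s)) as [Hlb Hglb].
  destruct (Hu t) as [s0 [Hs0 Hts0]].
  assert (Hlb0 : is_lb_Rbar (fun s => TS s /\ t < s) (Finite t)).
  { intros s [_ Hs]. simpl. lra. }
  pose proof (Hglb _ Hlb0) as Ht.
  pose proof (Hlb s0 (conj Hs0 Hts0)) as Hs.
  destruct (Glb_Rbar (fun s => TS s /\ t < s)) as [g| |]; simpl in *; try contradiction.
  split.
  - intros s HTs Hts. exact (Hlb s (conj HTs Hts)).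
  - intros g' Hg'. apply (Hglb (Finite g')). intros s [H1 H2]. simpl. auto.
Qed.

Lemma fjump_ge TS t : unbounded_above TS -> t <= fjump TS t.
Proof. intros Hu. apply (proj2 (fjump_spec TS t Hu)). intros; lra. Qed.

Lemma fjump_in TS t : time_scale TS -> unbounded_above TS -> TS (fjump TS t).
Proof.
  intros [_ Hc] Hu. apply Hc. intros eps Heps.
  destruct (fjump_spec TS t Hu) as [H1 H2].
  apply NNPP. intro Hn.
  assert (fjump TS t + eps <= fjump TS t) by
   (apply H2; intros s Hs Hts; apply Rnot_lt_le; intro Hlt;
    apply Hn; exists s; split; auto; pose proof (H1 s Hs Hts);
    rewrite Rabs_right; lra).
  lra.
Qed.

Lemma fjump_gap TS t s : unbounded_above TS -> TS s -> t < s -> fjump TS t <= s.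
Proof. intros Hu; apply (fjump_spec TS t Hu). Qed.
Lemma lub_ex (P : R -> Prop) a b : P a -> (forall r, P r -> r <= b) ->
  exists m, (forall r, P r -> r <= m) /\ (forall g, (forall r, P r -> r <= g) -> m <= g).
Proof.
  intros Ha Hb.
  destruct (completeness P) as [m [H1 H2]].
  - exists b. intros r Hr. auto.
  - exists a; auto.
  - exists m. split; [exact H1| exact H2].
Qed.

Lemma glb_ex (P : R -> Prop) a b : P a -> (forall r, P r -> b <= r) ->
  exists m, (forall r, P r -> m <= r) /\ (forall g, (forall r, P r -> g <= r) -> g <= m).
Proof.
  intros Ha Hb.
  destruct (lub_ex (fun v => P (- v)) (- a) (- b)) as [m [H1 H2]].
  - rewrite Ropp_involutive; auto.
  - intros r Hr. specialize (Hb _ Hr). lra.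
  - exists (- m). split.
    + intros r Hr. assert (- r <= m) by (apply H1; rewrite Ropp_involutive; auto). lra.
    + intros g Hg. assert (m <= - g). { apply H2. intros r Hr. specialize (Hg _ Hr). lra. } lra.
Qed.

Lemma all_eps_zero a c : 0 <= c -> (forall eps, 0 < eps -> Rabs a <= eps * c) -> a = 0.
Proof.
  intros Hc H. destruct (Req_dec a 0) as [|Hne]; auto.
  assert (Ha : 0 < Rabs a) by (apply Rabs_pos_lt; auto).
  specialize (H (Rabs a / (2 * (c + 1)))).
  assert (0 < Rabs a / (2 * (c + 1))) by (apply Rdiv_lt_0_compat; lra).
  specialize (H H0).
  assert (Rabs a / (2 * (c + 1)) * c < Rabs a).
  { unfold Rdiv. rewrite Rmult_assoc.
    assert (/ (2 * (c + 1)) * c < 1).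
    { apply (Rmult_lt_reg_l (2 * (c+1))); [lra|].
      rewrite <- Rmult_assoc, Rinv_r by lra. lra. }
    nra. }
  lra.
Qed.

Definition cont_at (TS : R -> Prop) (f : R -> R) (t : R) : Prop :=
  forall eps, 0 < eps -> exists delta, 0 < delta /\
    forall s, TS s -> Rabs (s - t) < delta -> Rabs (f s - f t) < eps.

Lemma deriv_jump TS f t D : unbounded_above TS -> has_delta_deriv TS f t D ->
  TS t -> f (fjump TS t) = f t + mu TS t * D.
Proof.
  intros Hu Hd Ht. unfold mu.
  assert (f (fjump TS t) - f t - D * (fjump TS t - t) = 0).
  { apply (all_eps_zero _ (Rabs (fjump TS t - t))); [apply Rabs_pos|].
    intros eps Heps. destruct (Hd eps Heps) as [d [Hd0 Hd1]].
    apply Hd1; auto. rewrite Rminus_diag, Rabs_R0; auto. }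
  lra.
Qed.

Lemma deriv_cont TS f t D : unbounded_above TS -> has_delta_deriv TS f t D ->
  TS t -> cont_at TS f t.
Proof.
  intros Hu Hd Ht eta Heta.
  pose proof (fjump_ge TS t Hu) as Hge.
  pose proof (deriv_jump TS f t D Hu Hd Ht) as Hj. unfold mu in Hj.
  set (m := fjump TS t - t) in *.
  assert (Hm0 : 0 <= m) by (unfold m; lra).
  assert (He : 0 < eta / (2 * (m + 1))) by (apply Rdiv_lt_0_compat; lra).
  destruct (Hd _ He) as [d [Hd0 Hd1]].
  assert (Hk : 0 < eta / (2 * (Rabs D + 1))) by (pose proof (Rabs_pos D); apply Rdiv_lt_0_compat; lra).
  exists (Rmin d (Rmin 1 (eta / (2 * (Rabs D + 1))))). split.
  { apply Rmin_pos; auto. apply Rmin_pos; lra. }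
  intros s Hs Hst.
  assert (Hst1 : Rabs (s - t) < d) by (eapply Rlt_le_trans; [exact Hst| apply Rmin_l]).
  assert (Hst2 : Rabs (s - t) < 1) by (eapply Rlt_le_trans; [exact Hst| eapply Rle_trans; [apply Rmin_r| apply Rmin_l]]).
  assert (Hst3 : Rabs (s - t) < eta / (2 * (Rabs D + 1))) by (eapply Rlt_le_trans; [exact Hst| eapply Rle_trans; [apply Rmin_r| apply Rmin_r]]).
  specialize (Hd1 s Hs Hst1).
  assert (Hm : Rabs (fjump TS t - s) <= m + 1).
  { unfold m. replace (fjump TS t - s) with ((fjump TS t - t) + - (s - t)) by ring.
    eapply Rle_trans; [apply Rabs_triang|]. rewrite Rabs_Ropp.
    rewrite (Rabs_right (fjump TS t - t)) by lra. lra. }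
  assert (He2 : eta / (2 * (m + 1)) * Rabs (fjump TS t - s) <= eta / 2).
  { apply Rle_trans with (eta / (2 * (m + 1)) * (m + 1)).
    - apply Rmult_le_compat_l; lra.
    - unfold Rdiv. field_simplify; lra. }
  assert (HD : Rabs D * Rabs (s - t) < eta / 2).
  { apply Rle_lt_trans with (Rabs D * (eta / (2 * (Rabs D + 1)))).
    - apply Rmult_le_compat_l; [apply Rabs_pos| lra].
    - pose proof (Rabs_pos D). unfold Rdiv.
      apply Rmult_lt_reg_r with (2 * (Rabs D + 1)); [lra|].
      field_simplify; nra. }
  replace (f s - f t) with (D * (s - t) - (f (fjump TS t) - f s - D * (fjump TS t - s))).
  2: { rewrite Hj. unfold m. ring. }
  unfold Rminus at 1. eapply Rle_lt_trans; [apply Rabs_triang|]. rewrite Rabs_Ropp, Rabs_mult. lra.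
Qed.

Lemma deriv_rd TS f t D : has_delta_deriv TS f t D -> 0 <= D -> fjump TS t = t ->
  forall eps, 0 < eps -> exists delta, 0 < delta /\
    forall s, TS s -> t < s < t + delta -> f t - eps * (s - t) <= f s.
Proof.
  intros Hd HD Hj eps Heps. destruct (Hd eps Heps) as [d [Hd0 Hd1]].
  exists d. split; auto. intros s Hs [H1 H2].
  assert (Rabs (s - t) < d) by (rewrite Rabs_right; lra).
  specialize (Hd1 s Hs H). rewrite Hj in Hd1.
  rewrite (Rabs_left1 (t - s)) in Hd1 by lra.
  pose proof (Rle_abs (f t - f s - D * (t - s))).
  assert (0 <= D * (s - t)) by (apply Rmult_le_pos; lra). nra.
Qed.

Lemma mono_eps TS s0 G eps : time_scale TS -> unbounded_above TS -> TS s0 -> 0 < eps ->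
 (forall t, TS t -> s0 <= t -> cont_at TS G t) ->
 (forall t, TS t -> s0 <= t -> fjump TS t <> t -> G t <= G (fjump TS t)) ->
 (forall t, TS t -> s0 <= t -> fjump TS t = t -> forall eps, 0 < eps -> exists delta, 0 < delta /\
      forall s, TS s -> t < s < t + delta -> G t - eps * (s - t) <= G s) ->
 forall t, TS t -> s0 <= t -> G s0 - eps * (t - s0) <= G t.
Proof.
  intros HT Hu Hs0 Heps Hc Hrs Hrd t1 Ht1 Hs1.
  apply Rnot_lt_le. intro Hb1.
  set (B := fun r => TS r /\ s0 <= r /\ G r < G s0 - eps * (r - s0)).
  destruct (glb_ex B t1 s0) as [tau [Htau1 Htau2]].
  { split; auto. }
  { intros r [_ [Hr _]]; auto. }
  assert (Hs0tau : s0 <= tau) by (apply Htau2; intros r [_ [Hr _]]; auto).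
  assert (Happ : forall d, 0 < d -> exists r, B r /\ r < tau + d).
  { intros d Hd. apply NNPP. intro Hn.
    assert (tau + d <= tau); [|lra].
    apply Htau2. intros r Hr. apply Rnot_lt_le. intro Hlt. apply Hn. exists r; auto. }
  assert (HTtau : TS tau).
  { destruct HT as [_ Hcl]. apply Hcl. intros e He.
    destruct (Happ e He) as [r [Hr Hr2]]. exists r. split; [apply Hr|].
    pose proof (Htau1 r Hr). rewrite Rabs_right; lra. }
  assert (HnotB : forall r, TS r -> s0 <= r -> r < tau -> G s0 - eps * (r - s0) <= G r).
  { intros r Hr1 Hr2 Hr3. apply Rnot_lt_le. intro Hl.
    assert (tau <= r) by (apply Htau1; split; auto). lra. }
  assert (HQ : G s0 - eps * (tau - s0) <= G tau).
  { destruct (Req_dec tau s0) as [Heq|Hne].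
    { rewrite Heq. lra. }
    set (A := fun r => TS r /\ s0 <= r /\ r < tau).
    destruct (lub_ex A s0 tau) as [rho [Hrho1 Hrho2]].
    { split; auto. split; lra. }
    { intros r [_ [_ Hr]]; lra. }
    assert (Hrt : rho <= tau) by (apply Hrho2; intros r [_ [_ Hr]]; lra).
    assert (Hsr : s0 <= rho) by (apply Hrho1; split; auto; split; lra).
    assert (HappA : forall d, 0 < d -> exists r, A r /\ rho - d < r).
    { intros d Hd. apply NNPP. intro Hn.
      assert (rho <= rho - d); [|lra].
      apply Hrho2. intros r Hr. apply Rnot_lt_le. intro Hlt. apply Hn. exists r; split; auto; lra. }
    destruct (Req_dec rho tau) as [Hrteq|Hrtne].
    - apply Rnot_lt_le. intro Hl.
      set (gap := G s0 - eps * (tau - s0) - G tau).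
      assert (Hgap : 0 < gap) by (unfold gap; lra).
      destruct (Hc tau HTtau Hs0tau gap Hgap) as [d [Hd Hd2]].
      destruct (HappA d Hd) as [r [[Hr1 [Hr2 Hr3]] Hr4]].
      assert (Rabs (r - tau) < d) by (rewrite Rabs_left; lra).
      specialize (Hd2 r Hr1 H).
      specialize (HnotB r Hr1 Hr2 Hr3).
      apply Rabs_def2 in Hd2. destruct Hd2.
      assert (eps * (r - s0) <= eps * (tau - s0)) by (apply Rmult_le_compat_l; lra).
      unfold gap in *. lra.
    - assert (Hrl : rho < tau) by lra.
      assert (HTrho : TS rho).
      { destruct HT as [_ Hcl]. apply Hcl. intros e He.
        destruct (HappA e He) as [r [[Hr1 Hr2] Hr3]]. exists r. split; auto.
        pose proof (Hrho1 r (conj Hr1 Hr2)). rewrite Rabs_left1; lra. }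
      assert (Hj : fjump TS rho = tau).
      { apply Rle_antisym.
        - apply fjump_gap; auto.
        - apply (proj2 (fjump_spec TS rho Hu)). intros s Hs Hrs0.
          apply Rnot_lt_le. intro Hst.
          assert (s <= rho) by (apply Hrho1; split; auto; split; lra). lra. }
      pose proof (Hrs rho HTrho Hsr ltac:(lra)) as H1. rewrite Hj in H1.
      pose proof (HnotB rho HTrho Hsr Hrl).
      assert (eps * (rho - s0) <= eps * (tau - s0)) by (apply Rmult_le_compat_l; lra).
      lra. }
  assert (HnB : ~ B tau) by (intros [_ [_ Hb]]; lra).
  assert (Hj : fjump TS tau = tau).
  { apply Rle_antisym; [|apply fjump_ge; auto].
    apply Rnot_lt_le. intro Hl.
    destruct (Happ (fjump TS tau - tau)) as [r [Hr1 Hr2]]; [lra|].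
    assert (tau <= r) by (apply Htau1; auto).
    assert (r <> tau) by (intro; subst; contradiction).
    assert (fjump TS tau <= r) by (apply fjump_gap; auto; [apply Hr1| lra]). lra. }
  destruct (Hrd tau HTtau Hs0tau Hj eps Heps) as [d [Hd Hd2]].
  destruct (Happ d Hd) as [r [Hr1 Hr2]].
  assert (tau <= r) by (apply Htau1; auto).
  assert (r <> tau) by (intro; subst; contradiction).
  destruct Hr1 as [Hr1a [Hr1b Hr1c]].
  specialize (Hd2 r Hr1a ltac:(lra)). lra.
Qed.

Lemma mono TS s0 G : time_scale TS -> unbounded_above TS -> TS s0 ->
 (forall t, TS t -> s0 <= t -> cont_at TS G t) ->
 (forall t, TS t -> s0 <= t -> fjump TS t <> t -> G t <= G (fjump TS t)) ->
 (forall t, TS t -> s0 <= t -> fjump TS t = t -> forall eps, 0 < eps -> exists delta, 0 < delta /\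
      forall s, TS s -> t < s < t + delta -> G t - eps * (s - t) <= G s) ->
 forall t, TS t -> s0 <= t -> G s0 <= G t.
Proof.
  intros HT Hu Hs0 Hc Hrs Hrd t Ht Hst.
  apply Rnot_lt_le. intro Hl.
  set (e := (G s0 - G t) / (2 * (t - s0 + 1))).
  assert (He : 0 < e) by (unfold e; apply Rdiv_lt_0_compat; lra).
  pose proof (mono_eps TS s0 G e HT Hu Hs0 He Hc Hrs Hrd t Ht Hst).
  assert (e * (t - s0) < G s0 - G t); [|lra].
  apply Rle_lt_trans with (e * (t - s0 + 1)).
  - apply Rmult_le_compat_l; lra.
  - unfold e. unfold Rdiv. field_simplify; lra.
Qed.

Lemma mono_deriv TS s0 G DG : time_scale TS -> unbounded_above TS -> TS s0 ->
 (forall t, TS t -> s0 <= t -> has_delta_deriv TS G t (DG t)) ->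
 (forall t, TS t -> s0 <= t -> 0 <= DG t) ->
 forall t, TS t -> s0 <= t -> G s0 <= G t.
Proof.
  intros HT Hu Hs0 Hd Hp. apply mono; auto.
  - intros t Ht Hst. eapply deriv_cont; eauto.
  - intros t Ht Hst _. rewrite (deriv_jump TS G t (DG t) Hu (Hd t Ht Hst) Ht).
    unfold mu. pose proof (fjump_ge TS t Hu). pose proof (Hp t Ht Hst).
    assert (0 <= (fjump TS t - t) * DG t) by (apply Rmult_le_pos; lra). lra.
  - intros t Ht Hst Hj. eapply deriv_rd; eauto.
Qed.

Lemma deriv_lin TS f g t Df Dg a b :
  has_delta_deriv TS f t Df -> has_delta_deriv TS g t Dg ->
  has_delta_deriv TS (fun s => a * f s + b * g s) t (a * Df + b * Dg).
Proof.
  intros Hf Hg eps Heps.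
  pose proof (Rabs_pos a) as P1. pose proof (Rabs_pos b) as P2.
  assert (H1 : 0 < eps / (2 * (Rabs a + 1))) by (apply Rdiv_lt_0_compat; lra).
  assert (H2 : 0 < eps / (2 * (Rabs b + 1))) by (apply Rdiv_lt_0_compat; lra).
  destruct (Hf _ H1) as [d1 [Hd1 Hf1]]. destruct (Hg _ H2) as [d2 [Hd2 Hg2]].
  exists (Rmin d1 d2). split; [apply Rmin_pos; auto|].
  intros s Hs Hst.
  assert (Hs1 : Rabs (s - t) < d1) by (eapply Rlt_le_trans; [exact Hst| apply Rmin_l]).
  assert (Hs2 : Rabs (s - t) < d2) by (eapply Rlt_le_trans; [exact Hst| apply Rmin_r]).
  specialize (Hf1 s Hs Hs1). specialize (Hg2 s Hs Hs2).
  set (sg := fjump TS t) in *.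
  set (E1 := f sg - f s - Df * (sg - s)) in *.
  set (E2 := g sg - g s - Dg * (sg - s)) in *.
  replace (a * f sg + b * g sg - (a * f s + b * g s) - (a * Df + b * Dg) * (sg - s))
    with (a * E1 + b * E2) by (unfold E1, E2; ring).
  eapply Rle_trans; [apply Rabs_triang|]. rewrite !Rabs_mult.
  pose proof (Rabs_pos (sg - s)) as Hp.
  assert (Ha : Rabs a * Rabs E1 <= eps / 2 * Rabs (sg - s)).
  { apply Rle_trans with (Rabs a * (eps / (2 * (Rabs a + 1)) * Rabs (sg - s))).
    - apply Rmult_le_compat_l; auto.
    - rewrite <- Rmult_assoc. apply Rmult_le_compat_r; auto.
      unfold Rdiv. apply Rmult_le_reg_r with (2 * (Rabs a + 1)); [lra|].
      field_simplify; lra. }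
  assert (Hb : Rabs b * Rabs E2 <= eps / 2 * Rabs (sg - s)).
  { apply Rle_trans with (Rabs b * (eps / (2 * (Rabs b + 1)) * Rabs (sg - s))).
    - apply Rmult_le_compat_l; auto.
    - rewrite <- Rmult_assoc. apply Rmult_le_compat_r; auto.
      unfold Rdiv. apply Rmult_le_reg_r with (2 * (Rabs b + 1)); [lra|].
      field_simplify; lra. }
  lra.
Qed.

Lemma deriv_prod TS f g t Df Dg : unbounded_above TS -> TS t ->
  has_delta_deriv TS f t Df -> has_delta_deriv TS g t Dg ->
  has_delta_deriv TS (fun s => f s * g s) t (Df * g (fjump TS t) + f t * Dg).
Proof.
  intros Hu Ht Hf Hg eps Heps.
  pose proof (deriv_cont TS f t Df Hu Hf Ht) as Hfc.
  set (sg := fjump TS t) in *.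
  pose proof (Rabs_pos (g sg)) as P1. pose proof (Rabs_pos (f t)) as P2. pose proof (Rabs_pos Dg) as P3.
  assert (H1 : 0 < eps / (3 * (Rabs (g sg) + 1))) by (apply Rdiv_lt_0_compat; lra).
  assert (H2 : 0 < Rmin 1 (eps / (3 * (Rabs (f t) + 1)))) by (apply Rmin_pos; [lra| apply Rdiv_lt_0_compat; lra]).
  assert (H3 : 0 < eps / (3 * (Rabs Dg + 1))) by (apply Rdiv_lt_0_compat; lra).
  destruct (Hf _ H1) as [d1 [Hd1 Hf1]]. destruct (Hg _ H2) as [d2 [Hd2 Hg2]].
  destruct (Hfc _ H3) as [d3 [Hd3 Hf3]].
  exists (Rmin d1 (Rmin d2 d3)). split; [apply Rmin_pos; auto; apply Rmin_pos; auto|].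
  intros s Hs Hst.
  assert (Hs1 : Rabs (s - t) < d1) by (eapply Rlt_le_trans; [exact Hst| apply Rmin_l]).
  assert (Hs2 : Rabs (s - t) < d2) by (eapply Rlt_le_trans; [exact Hst| eapply Rle_trans; [apply Rmin_r|apply Rmin_l]]).
  assert (Hs3 : Rabs (s - t) < d3) by (eapply Rlt_le_trans; [exact Hst| eapply Rle_trans; [apply Rmin_r|apply Rmin_r]]).
  specialize (Hf1 s Hs Hs1). specialize (Hg2 s Hs Hs2). specialize (Hf3 s Hs Hs3).
  fold sg in Hf1, Hg2.
  set (E1 := f sg - f s - Df * (sg - s)) in *.
  set (E2 := g sg - g s - Dg * (sg - s)) in *.
  set (E3 := f s - f t) in *.
  pose proof (Rabs_pos (sg - s)) as Hp.
  set (A := Rabs (sg - s)) in *.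
  replace (f sg * g sg - f s * g s - (Df * g sg + f t * Dg) * (sg - s))
    with (E1 * g sg + f t * E2 + E3 * (Dg * (sg - s) + E2)) by (unfold E1, E2, E3; ring).
  assert (Hm1 : Rmin 1 (eps / (3 * (Rabs (f t) + 1))) <= 1) by apply Rmin_l.
  assert (Hm2 : Rmin 1 (eps / (3 * (Rabs (f t) + 1))) <= eps / (3 * (Rabs (f t) + 1))) by apply Rmin_r.
  assert (Ha : Rabs (E1 * g sg) <= eps / 3 * A).
  { rewrite Rabs_mult.
    apply Rle_trans with (eps / (3 * (Rabs (g sg) + 1)) * A * Rabs (g sg)).
    - apply Rmult_le_compat_r; auto.
    - apply Rle_trans with (eps / (3 * (Rabs (g sg) + 1)) * (Rabs (g sg) + 1) * A).
      + assert (0 <= eps / (3 * (Rabs (g sg) + 1)) * A) by (apply Rmult_le_pos; lra). nra.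
      + apply Rmult_le_compat_r; auto. unfold Rdiv. field_simplify; lra. }
  assert (Hb : Rabs (f t * E2) <= eps / 3 * A).
  { rewrite Rabs_mult.
    apply Rle_trans with (Rabs (f t) * (eps / (3 * (Rabs (f t) + 1)) * A)).
    - apply Rmult_le_compat_l; auto. eapply Rle_trans; [exact Hg2|].
      apply Rmult_le_compat_r; auto.
    - apply Rle_trans with (eps / (3 * (Rabs (f t) + 1)) * (Rabs (f t) + 1) * A).
      + assert (0 <= eps / (3 * (Rabs (f t) + 1)) * A) by (apply Rmult_le_pos; lra). nra.
      + apply Rmult_le_compat_r; auto. unfold Rdiv. field_simplify; lra. }
  assert (Hc : Rabs (E3 * (Dg * (sg - s) + E2)) <= eps / 3 * A).
  { rewrite Rabs_mult.
    assert (Rabs (Dg * (sg - s) + E2) <= (Rabs Dg + 1) * A).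
    { eapply Rle_trans; [apply Rabs_triang|]. rewrite Rabs_mult. fold A.
      assert (Rmin 1 (eps / (3 * (Rabs (f t) + 1))) * A <= 1 * A) by (apply Rmult_le_compat_r; lra).
      replace ((Rabs Dg + 1) * A) with (Rabs Dg * A + 1 * A) by ring. lra. }
    apply Rle_trans with (eps / (3 * (Rabs Dg + 1)) * ((Rabs Dg + 1) * A)).
    - apply Rmult_le_compat; try apply Rabs_pos; lra.
    - rewrite <- Rmult_assoc. apply Rmult_le_compat_r; auto. unfold Rdiv. field_simplify; lra. }
  eapply Rle_trans; [apply Rabs_triang|].
  eapply Rle_trans; [apply Rplus_le_compat_r; apply Rabs_triang|]. lra.
Qed.

Lemma ln_approx w : 0 < w -> forall eta, 0 < eta -> exists delta, 0 < delta /\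
  forall v, Rabs (v - w) < delta -> Rabs (ln v - ln w - (v - w) / w) <= eta * Rabs (v - w).
Proof.
  intros Hw eta Heta. destruct (derivable_pt_lim_ln w Hw eta Heta) as [d Hd].
  exists d. split; [apply cond_pos|]. intros v Hv.
  destruct (Req_dec v w) as [->|Hne].
  { rewrite !Rminus_diag. unfold Rdiv. rewrite Rmult_0_l, Rminus_0_r, Rabs_R0. lra. }
  assert (Hh : v - w <> 0) by lra.
  specialize (Hd (v - w) Hh Hv). replace (w + (v - w)) with v in Hd by ring.
  replace (ln v - ln w - (v - w) / w) with ((v - w) * ((ln v - ln w) / (v - w) - / w))
    by (field; auto; lra).
  rewrite Rabs_mult. rewrite (Rmult_comm eta). apply Rmult_le_compat_l; [apply Rabs_pos| lra].
Qed.

Lemma cont_ln TS f t : cont_at TS f t -> 0 < f t -> cont_at TS (fun s => ln (f s)) t.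
Proof.
  intros Hc Hp eps Heps.
  destruct (ln_approx (f t) Hp 1 ltac:(lra)) as [d1 [Hd1 Hl]].
  set (K := / f t + 1).
  assert (HK : 0 < K) by (unfold K; pose proof (Rinv_0_lt_compat _ Hp); lra).
  destruct (Hc (Rmin d1 (eps / K))) as [d2 [Hd2 Hc2]].
  { apply Rmin_pos; auto. apply Rdiv_lt_0_compat; lra. }
  exists d2. split; auto. intros s Hs Hst.
  specialize (Hc2 s Hs Hst).
  assert (H1 : Rabs (f s - f t) < d1) by (eapply Rlt_le_trans; [exact Hc2| apply Rmin_l]).
  assert (H2 : Rabs (f s - f t) < eps / K) by (eapply Rlt_le_trans; [exact Hc2| apply Rmin_r]).
  specialize (Hl _ H1).
  replace (ln (f s) - ln (f t)) with ((ln (f s) - ln (f t) - (f s - f t) / f t) + (f s - f t) * / f t)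
    by (field; lra).
  eapply Rle_lt_trans; [apply Rabs_triang|]. rewrite Rabs_mult.
  rewrite (Rabs_right (/ f t)) by (apply Rle_ge, Rlt_le, Rinv_0_lt_compat; auto).
  assert (Rabs (f s - f t) * K < eps).
  { apply Rmult_lt_reg_r with (/ K); [apply Rinv_0_lt_compat; auto|].
    rewrite Rmult_assoc, Rinv_r by lra. rewrite Rmult_1_r. exact H2. }
  unfold K in H. lra.
Qed.

Lemma cont_lin TS f g t a b : cont_at TS f t -> cont_at TS g t ->
  cont_at TS (fun s => a * f s + b * g s) t.
Proof.
  intros Hf Hg eps Heps.
  pose proof (Rabs_pos a) as P1. pose proof (Rabs_pos b) as P2.
  assert (H1 : 0 < eps / (2 * (Rabs a + 1))) by (apply Rdiv_lt_0_compat; lra).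
  assert (H2 : 0 < eps / (2 * (Rabs b + 1))) by (apply Rdiv_lt_0_compat; lra).
  destruct (Hf _ H1) as [d1 [Hd1 Hf1]]. destruct (Hg _ H2) as [d2 [Hd2 Hg2]].
  exists (Rmin d1 d2). split; [apply Rmin_pos; auto|].
  intros s Hs Hst.
  assert (Hs1 : Rabs (s - t) < d1) by (eapply Rlt_le_trans; [exact Hst| apply Rmin_l]).
  assert (Hs2 : Rabs (s - t) < d2) by (eapply Rlt_le_trans; [exact Hst| apply Rmin_r]).
  specialize (Hf1 s Hs Hs1). specialize (Hg2 s Hs Hs2).
  replace (a * f s + b * g s - (a * f t + b * g t)) with (a * (f s - f t) + b * (g s - g t)) by ring.
  eapply Rle_lt_trans; [apply Rabs_triang|]. rewrite !Rabs_mult.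
  assert (Rabs a * Rabs (f s - f t) <= eps / 2).
  { apply Rle_trans with ((Rabs a + 1) * (eps / (2 * (Rabs a + 1)))).
    - apply Rmult_le_compat; try apply Rabs_pos; lra.
    - unfold Rdiv. field_simplify; lra. }
  assert (Rabs b * Rabs (g s - g t) < eps / 2).
  { apply Rle_lt_trans with (Rabs b * (eps / (2 * (Rabs b + 1)))).
    - apply Rmult_le_compat_l; lra.
    - unfold Rdiv. apply Rmult_lt_reg_r with (2 * (Rabs b + 1)); [lra|].
      field_simplify; nra. }
  lra.
Qed.

Lemma deriv_ln TS f t D : unbounded_above TS -> TS t -> has_delta_deriv TS f t D ->
  fjump TS t = t -> 0 < f t -> has_delta_deriv TS (fun s => ln (f s)) t (D / f t).
Proof.
  intros Hu Ht Hd Hj Hp eps Heps.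
  pose proof (deriv_cont TS f t D Hu Hd Ht) as Hc.
  set (w := f t) in *.
  pose proof (Rabs_pos D) as P1.
  assert (He1 : 0 < eps / (2 * (Rabs D + 1))) by (apply Rdiv_lt_0_compat; lra).
  destruct (ln_approx w Hp _ He1) as [d1 [Hd1 Hl]].
  destruct (Hc d1 Hd1) as [d2 [Hd2 Hc2]].
  assert (He2 : 0 < Rmin 1 (eps * w / 2)) by (apply Rmin_pos; [lra| apply Rdiv_lt_0_compat; nra]).
  destruct (Hd _ He2) as [d3 [Hd3 Hd3']].
  exists (Rmin d2 d3). split; [apply Rmin_pos; auto|].
  intros s Hs Hst. rewrite Hj. change (f t) with w.
  assert (Hs2 : Rabs (s - t) < d2) by (eapply Rlt_le_trans; [exact Hst| apply Rmin_l]).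
  assert (Hs3 : Rabs (s - t) < d3) by (eapply Rlt_le_trans; [exact Hst| apply Rmin_r]).
  specialize (Hc2 s Hs Hs2). specialize (Hd3' s Hs Hs3). rewrite Hj in Hd3'.
  fold w in Hc2, Hd3'.
  specialize (Hl _ Hc2).
  set (EL := ln (f s) - ln w - (f s - w) / w) in *.
  set (EF := w - f s - D * (t - s)) in *.
  replace (ln w - ln (f s) - D / w * (t - s)) with (- EL + EF / w) by (unfold EL, EF; field; lra).
  eapply Rle_trans; [apply Rabs_triang|]. rewrite Rabs_Ropp.
  set (A := Rabs (t - s)) in *.
  assert (HA : 0 <= A) by apply Rabs_pos.
  assert (Hm1 : Rmin 1 (eps * w / 2) <= 1) by apply Rmin_l.
  assert (Hm2 : Rmin 1 (eps * w / 2) <= eps * w / 2) by apply Rmin_r.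
  assert (HF : Rabs (f s - w) <= (Rabs D + 1) * A).
  { replace (f s - w) with (- EF - D * (t - s)) by (unfold EF; ring).
    eapply Rle_trans; [apply Rabs_triang|]. rewrite Rabs_Ropp, Rabs_Ropp, Rabs_mult. fold A.
    assert (Rmin 1 (eps * w / 2) * A <= 1 * A) by (apply Rmult_le_compat_r; lra).
    replace ((Rabs D + 1) * A) with (Rabs D * A + 1 * A) by ring. lra. }
  assert (H1 : Rabs EL <= eps / 2 * A).
  { eapply Rle_trans; [exact Hl|].
    apply Rle_trans with (eps / (2 * (Rabs D + 1)) * ((Rabs D + 1) * A)).
    - apply Rmult_le_compat_l; lra.
    - rewrite <- Rmult_assoc. apply Rmult_le_compat_r; auto. unfold Rdiv. field_simplify; lra. }
  assert (H2 : Rabs (EF / w) <= eps / 2 * A).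
  { unfold Rdiv. rewrite Rabs_mult.
    rewrite (Rabs_right (/ w)) by (apply Rle_ge, Rlt_le, Rinv_0_lt_compat; auto).
    apply Rle_trans with (eps * w / 2 * A * / w).
    - apply Rmult_le_compat_r; [apply Rlt_le, Rinv_0_lt_compat; auto|].
      eapply Rle_trans; [exact Hd3'|]. apply Rmult_le_compat_r; auto.
    - right. field. lra. }
  lra.
Qed.

Lemma ln_le a b : 0 < a -> a <= b -> ln a <= ln b.
Proof.
  intros Ha Hab. destruct (Req_dec a b) as [->|Hne]; [lra|].
  left. apply ln_increasing; lra.
Qed.

Lemma ln_le_xm1 v : 0 < v -> ln v <= v - 1.
Proof. intros Hv. pose proof (exp_ineq1_le (ln v)). rewrite exp_ln in H; lra. Qed.

Lemma ln_concave v th : 0 < v -> 0 <= th <= 1 -> th * ln v <= ln (1 - th + th * v).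
Proof.
  intros Hv Hth.
  set (w := 1 - th + th * v).
  assert (Hw : 0 < w).
  { unfold w. destruct (Req_dec th 0) as [->|Hne]; [lra|]. nra. }
  pose proof (ln_le_xm1 (v / w) ltac:(apply Rdiv_lt_0_compat; auto)) as H1.
  pose proof (ln_le_xm1 (/ w) ltac:(apply Rinv_0_lt_compat; auto)) as H2.
  unfold Rdiv in H1. rewrite ln_mult in H1 by (auto; apply Rinv_0_lt_compat; auto).
  rewrite ln_Rinv in H1, H2 by auto.
  assert (th * (ln v + - ln w) + (1 - th) * (- ln w) <= th * (v * / w - 1) + (1 - th) * (/ w - 1)).
  { apply Rplus_le_compat; apply Rmult_le_compat_l; lra. }
  assert (th * (v * / w - 1) + (1 - th) * (/ w - 1) = 0).
  { unfold w in *. field. lra. }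
  lra.
Qed.

Lemma div_nonneg a b : 0 <= a -> 0 < b -> 0 <= a / b.
Proof. intros. unfold Rdiv. apply Rmult_le_pos; auto. apply Rlt_le, Rinv_0_lt_compat; auto. Qed.

Lemma exp_le a b : a <= b -> exp a <= exp b.
Proof. intros [H|H]; [left; apply exp_increasing; auto| subst; lra]. Qed.

Lemma deriv_val TS f t D1 D2 : D1 = D2 -> has_delta_deriv TS f t D1 -> has_delta_deriv TS f t D2.
Proof. intros ->; auto. Qed.

Lemma deriv_const TS k t : has_delta_deriv TS (fun _ => k) t 0.
Proof.
  intros eps Heps. exists 1. split; [lra|]. intros s _ _.
  replace (k - k - 0 * (fjump TS t - s)) with 0 by ring. rewrite Rabs_R0.
  apply Rmult_le_pos; [lra| apply Rabs_pos].
Qed.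

Lemma mono_deriv_neg TS s0 G DG : time_scale TS -> unbounded_above TS -> TS s0 ->
 (forall t, TS t -> s0 <= t -> has_delta_deriv TS G t (DG t)) ->
 (forall t, TS t -> s0 <= t -> DG t <= 0) ->
 forall t, TS t -> s0 <= t -> G t <= G s0.
Proof.
  intros HT Hu Hs0 Hd Hp t Ht Hst.
  pose proof (mono_deriv TS s0 (fun s => -1 * G s + 0 * G s) (fun s => -1 * DG s + 0 * DG s)
    HT Hu Hs0) as H.
  assert (-1 * G s0 + 0 * G s0 <= -1 * G t + 0 * G t); [|lra].
  apply H; auto.
  - intros r Hr Hsr. apply deriv_lin; auto.
  - intros r Hr Hsr. specialize (Hp r Hr Hsr). lra.
Qed.

Theorem theorem26
  (TS : R -> Prop) (t0 : R) (b c : R -> R) (x0 y0 z0 : R)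
  (x y z : R -> R) :
  time_scale TS -> unbounded_above TS -> TS t0 ->
  (forall t, TS t -> 0 <= b t) -> (forall t, TS t -> 0 <= c t) ->
  pos_regressive TS (fun t => c t - b t) ->
  0 < x0 -> 0 < y0 -> 0 <= z0 ->
  (exists M, 0 < M /\ forall t, TS t -> b t <= M * (c t - b t)) ->
  delta_integral_infinite TS (fun t => c t - b t) t0 ->
  (forall t, TS t -> 0 < x t /\ 0 < y t /\ 0 <= z t) ->
  (forall t, TS t ->
     has_delta_deriv TS x t (- (b t * x t * y (fjump TS t)) / (x t + y t))) ->
  (forall t, TS t ->
     has_delta_deriv TS y t
       ((b t * x t * y (fjump TS t)) / (x t + y t) - c t * y (fjump TS t))) ->
  (forall t, TS t -> has_delta_deriv TS z t (c t * y (fjump TS t))) ->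
  x t0 = x0 -> y t0 = y0 -> z t0 = z0 ->
  exists alpha, 0 < alpha < x0 + y0 + z0 /\
    conv_at_infty TS x alpha /\ conv_at_infty TS y 0 /\
    conv_at_infty TS z (x0 + y0 + z0 - alpha).
Proof.
  intros HT Hu Ht0 Hb Hc _ Hx0 Hy0 Hz0 [M [HM HbM]] [F [HF HFinf]] Hpos Hdx Hdy Hdz Ex Ey Ez.
  assert (Hsg : forall t, TS (fjump TS t)) by (intro; apply fjump_in; auto).
  assert (Hp : forall t, TS t -> 0 <= c t - b t).
  { intros t Ht. specialize (HbM t Ht). specialize (Hb t Ht). nra. }
  assert (Hq : forall t, TS t -> b t * x t * y (fjump TS t) / (x t + y t) <= b t * y (fjump TS t)).
  { intros t Ht. destruct (Hpos t Ht) as [H1 [H2 _]]. destruct (Hpos _ (Hsg t)) as [_ [H3 _]].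
    pose proof (Hb t Ht).
    apply Rmult_le_reg_r with (x t + y t); [lra|].
    unfold Rdiv. rewrite Rmult_assoc, Rinv_l, Rmult_1_r by lra.
    assert (0 <= b t * y (fjump TS t)) by (apply Rmult_le_pos; lra). nra. }
  assert (Hq0 : forall t, TS t -> 0 <= b t * x t * y (fjump TS t) / (x t + y t)).
  { intros t Ht. destruct (Hpos t Ht) as [H1 [H2 _]]. destruct (Hpos _ (Hsg t)) as [_ [H3 _]].
    apply div_nonneg; [|lra]. pose proof (Hb t Ht).
    apply Rmult_le_pos; [apply Rmult_le_pos|]; lra. }
  assert (Hxdec : forall s t, TS s -> TS t -> s <= t -> x t <= x s).
  { intros s t Hs Ht Hst.
    apply (mono_deriv_neg TS s x (fun t => - (b t * x t * y (fjump TS t)) / (x t + y t))); auto.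
    intros r Hr _. specialize (Hq0 r Hr).
    replace (- (b r * x r * y (fjump TS r)) / (x r + y r)) with
      (- (b r * x r * y (fjump TS r) / (x r + y r))).
    - lra.
    - destruct (Hpos r Hr) as [H1 [H2 _]]. field. lra. }
  assert (Hcons : forall t, TS t -> t0 <= t -> x t + y t + z t = x0 + y0 + z0).
  { intros t Ht Ht0t.
    set (S := fun s => 1 * (1 * x s + 1 * y s) + 1 * z s).
    assert (HdS : forall r, TS r -> t0 <= r -> has_delta_deriv TS S r 0).
    { intros r Hr _. unfold S. eapply deriv_val; [|apply deriv_lin; [apply deriv_lin|]; eauto].
      destruct (Hpos r Hr) as [H1 [H2 _]]. field. lra. }
    pose proof (mono_deriv TS t0 S (fun _ => 0) HT Hu Ht0 HdS ltac:(intros; lra) t Ht Ht0t).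
    pose proof (mono_deriv_neg TS t0 S (fun _ => 0) HT Hu Ht0 HdS ltac:(intros; lra) t Ht Ht0t).
    unfold S in *. rewrite Ex, Ey, Ez in *. lra. }
  assert (HFm : forall t, TS t -> t0 <= t -> F t0 <= F t).
  { intros t Ht Ht0t. apply (mono_deriv TS t0 F (fun t => c t - b t)); auto. }
  set (H := fun s => 1 * F s + 1 * (1 - F t0)).
  assert (HyH : forall t, TS t -> t0 <= t -> H t * y t <= y0).
  { intros t Ht Ht0t.
    assert (H t0 * y t0 = y0) by (unfold H; rewrite Ey; ring).
    rewrite <- H0.
    apply (mono_deriv_neg TS t0 (fun s => H s * y s)
      (fun r => (1 * (c r - b r) + 1 * 0) * y (fjump TS r) + H r *
         ((b r * x r * y (fjump TS r)) / (x r + y r) - c r * y (fjump TS r)))); auto.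
    - intros r Hr _. apply deriv_prod; auto. unfold H. apply deriv_lin; auto. apply deriv_const.
    - intros r Hr Hr0. pose proof (HFm r Hr Hr0). specialize (Hq r Hr). specialize (Hp r Hr).
      destruct (Hpos _ (Hsg r)) as [_ [H3 _]].
      set (Y := y (fjump TS r)) in *. set (Q := b r * x r * Y / (x r + y r)) in *.
      assert (HH : 1 <= H r) by (unfold H; lra).
      assert (H r * (Q - c r * Y) <= H r * (- ((c r - b r) * Y))).
      { apply Rmult_le_compat_l; [lra|]. replace (- ((c r - b r) * Y)) with (b r * Y - c r * Y) by ring. lra. }
      assert (0 <= (H r - 1) * ((c r - b r) * Y)) by (apply Rmult_le_pos; [lra| apply Rmult_le_pos; lra]).
      nra. }
  assert (Hlow : exists m, 0 < m /\ forall t, TS t -> t0 <= t -> m <= x t).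
  { set (th := M / (1 + M)).
    assert (Hth : 0 <= th < 1).
    { unfold th. split; [apply div_nonneg; lra|].
      apply Rmult_lt_reg_r with (1 + M); [lra|]. unfold Rdiv. rewrite Rmult_assoc, Rinv_l by lra. lra. }
    assert (Hthc : forall t, TS t -> b t <= th * c t).
    { intros t Ht. specialize (HbM t Ht). unfold th.
      apply Rmult_le_reg_r with (1 + M); [lra|].
      replace (M / (1 + M) * c t * (1 + M)) with (M * c t) by (field; lra). nra. }
    set (Dx := fun t => - (b t * x t * y (fjump TS t)) / (x t + y t)).
    set (Dy := fun t => (b t * x t * y (fjump TS t)) / (x t + y t) - c t * y (fjump TS t)).
    set (u := fun s => 1 * x s + 1 * y s).
    assert (Hdu : forall r, TS r -> has_delta_deriv TS u r (1 * Dx r + 1 * Dy r)).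
    { intros r Hr. unfold u. apply deriv_lin; [apply Hdx| apply Hdy]; auto. }
    assert (Hupos : forall r, TS r -> 0 < u r).
    { intros r Hr. destruct (Hpos r Hr) as [H1 [H2 _]]. unfold u. lra. }
    set (G := fun s => 1 * ln (x s) + (- th) * ln (u s)).
    assert (HG : forall t, TS t -> t0 <= t -> G t0 <= G t).
    { apply mono; auto.
      - intros t Ht _. unfold G. apply cont_lin; apply cont_ln.
        + eapply deriv_cont; eauto.
        + apply Hpos; auto.
        + eapply deriv_cont; eauto.
        + apply Hupos; auto.
      - intros t Ht _ Hne.
        pose proof (fjump_ge TS t Hu) as Hge.
        pose proof (deriv_jump TS x t (Dx t) Hu (Hdx t Ht) Ht) as Hxs.
        pose proof (deriv_jump TS u t _ Hu (Hdu t Ht) Ht) as Hus.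
        unfold mu in Hxs, Hus.
        destruct (Hpos t Ht) as [H1 [H2 _]]. destruct (Hpos _ (Hsg t)) as [H1' [H3 _]].
        pose proof (Hupos _ (Hsg t)) as Hu1. pose proof (Hupos t Ht) as Hu0.
        set (w := x (fjump TS t) / x t).
        set (v := u (fjump TS t) / u t).
        assert (Hw : 0 < w) by (unfold w; apply Rdiv_lt_0_compat; auto).
        assert (Hv : 0 < v) by (unfold v; apply Rdiv_lt_0_compat; auto).
        assert (Hlw : ln (x (fjump TS t)) = ln (x t) + ln w).
        { rewrite <- ln_mult by auto. f_equal. unfold w. field. lra. }
        assert (Hlv : ln (u (fjump TS t)) = ln (u t) + ln v).
        { rewrite <- ln_mult by auto. f_equal. unfold v. field. lra. }
        assert (Hdiff : w - (1 - th + th * v) =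
          (fjump TS t - t) * y (fjump TS t) * (th * c t - b t) / u t).
        { unfold w, v. rewrite Hxs, Hus. unfold Dx, Dy, u. field. split; lra. }
        assert (Hd0 : 0 <= (fjump TS t - t) * y (fjump TS t) * (th * c t - b t) / u t).
        { apply div_nonneg; auto. specialize (Hthc t Ht).
          apply Rmult_le_pos; [apply Rmult_le_pos|]; lra. }
        assert (Hpos1 : 0 < 1 - th + th * v).
        { assert (0 <= th * v) by (apply Rmult_le_pos; lra). lra. }
        pose proof (ln_le _ w Hpos1 ltac:(lra)) as Hl1.
        pose proof (ln_concave v th Hv ltac:(lra)) as Hl2.
        unfold G. rewrite Hlw, Hlv.
        assert (th * ln v <= ln w) by lra.
        assert (- th * (ln (u t) + ln v) = - th * ln (u t) - th * ln v) by ring.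
        lra.
      - intros t Ht _ Hj.
        destruct (Hpos t Ht) as [H1 [H2 _]].
        apply (deriv_rd TS G t (1 * (Dx t / x t) + - th * ((1 * Dx t + 1 * Dy t) / u t))).
        + unfold G. apply deriv_lin; apply deriv_ln; auto.
        + unfold Dx, Dy, u. rewrite Hj.
          replace (1 * (- (b t * x t * y t) / (x t + y t) / x t) +
            - th * ((1 * (- (b t * x t * y t) / (x t + y t)) +
              1 * (b t * x t * y t / (x t + y t) - c t * y t)) / (1 * x t + 1 * y t)))
            with (y t * (th * c t - b t) / (x t + y t)) by (field; split; lra).
          apply div_nonneg; [|lra]. specialize (Hthc t Ht). apply Rmult_le_pos; lra.
        + exact Hj. }
    set (C := ln x0 - th * ln (x0 + y0)).
    exists (exp (C / (1 - th))). split; [apply exp_pos|].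
    intros t Ht Ht0t. specialize (HG t Ht Ht0t).
    destruct (Hpos t Ht) as [H1 [H2 _]].
    unfold G, u in HG. rewrite Ex, Ey in HG.
    assert (Hlu : ln (x t) <= ln (1 * x t + 1 * y t)) by (apply ln_le; lra).
    assert (th * ln (x t) <= th * ln (1 * x t + 1 * y t)) by (apply Rmult_le_compat_l; lra).
    assert (HC : C <= (1 - th) * ln (x t)).
    { unfold C. replace (1 * x0 + 1 * y0) with (x0 + y0) in HG by ring. nra. }
    rewrite <- (exp_ln (x t)) by auto. apply exp_le.
    apply Rmult_le_reg_l with (1 - th); [lra|].
    replace ((1 - th) * (C / (1 - th))) with C by (field; lra). exact HC. }
  destruct Hlow as [m [Hm Hmx]].
  destruct (glb_ex (fun v => exists t, TS t /\ t0 <= t /\ v = x t) x0 m) as [al [Hal1 Hal2]].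
  { exists t0. split; auto. split; [lra| auto]. }
  { intros r [t [Ht [Ht0t ->]]]. auto. }
  assert (Halm : m <= al).
  { apply Hal2. intros r [t [Ht [Ht0t ->]]]. auto. }
  assert (Halx0 : al <= x0) by (apply Hal1; exists t0; split; auto; split; [lra| auto]).
  assert (Hxconv : conv_at_infty TS x al).
  { intros eps Heps.
    assert (Hex : exists t1, TS t1 /\ t0 <= t1 /\ x t1 < al + eps).
    { apply NNPP. intro Hn.
      assert (al + eps <= al); [|lra].
      apply Hal2. intros r [t [Ht [Ht0t ->]]]. apply Rnot_lt_le. intro Hl.
      apply Hn. exists t. auto. }
    destruct Hex as [t1 [Ht1 [Ht01 Hx1]]].
    exists t1. intros t Ht Ht1t.
    assert (x t <= x t1) by (apply Hxdec; auto).
    assert (al <= x t) by (apply Hal1; exists t; split; auto; split; [lra| auto]).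
    rewrite Rabs_right; lra. }
  assert (Hyconv : conv_at_infty TS y 0).
  { intros eps Heps.
    destruct (HFinf (y0 / eps)) as [T1 HT1].
    exists (Rmax T1 t0). intros t Ht Htt.
    pose proof (Rmax_l T1 t0). pose proof (Rmax_r T1 t0).
    specialize (HT1 t Ht ltac:(lra)). specialize (HyH t Ht ltac:(lra)).
    destruct (Hpos t Ht) as [_ [H2 _]].
    rewrite Rminus_0_r, Rabs_right by lra.
    unfold H in HyH.
    assert (Hk : 0 <= y0 / eps) by (apply div_nonneg; lra).
    assert (y t * (1 + y0 / eps) <= y0) by nra.
    assert (eps * (1 + y0 / eps) = eps + y0) by (field; lra).
    nra. }
  exists al. split; [split; lra|]. split; [exact Hxconv|]. split; [exact Hyconv|].
  intros eps Heps.
  destruct (Hxconv (eps / 2) ltac:(lra)) as [T1 HT1].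
  destruct (Hyconv (eps / 2) ltac:(lra)) as [T2 HT2].
  exists (Rmax (Rmax T1 T2) t0). intros t Ht Htt.
  pose proof (Rmax_l (Rmax T1 T2) t0). pose proof (Rmax_r (Rmax T1 T2) t0).
  pose proof (Rmax_l T1 T2). pose proof (Rmax_r T1 T2).
  specialize (HT1 t Ht ltac:(lra)). specialize (HT2 t Ht ltac:(lra)).
  specialize (Hcons t Ht ltac:(lra)).
  replace (z t - (x0 + y0 + z0 - al)) with (- (x t - al) + - (y t - 0)) by lra.
  eapply Rle_lt_trans; [apply Rabs_triang|]. rewrite !Rabs_Ropp. lra.
Qed.
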